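(* Consider a single advertising slot sold by the following hybrid auction. Each advertiser $j$ submits a bid pair $(m_j, c_j)$ with $m_j, c_j \ge 0$ (a per-impression bid and a per-click bid). The auctioneer has, for each advertiser $j$, a value $q_j > 0$ (the auctioneer index) that does not depend on any bids. The effective bid of advertiser $j$ is $R_j = \max(m_j, c_j q_j)$. The advertiser $j^*$ with the highest effective bid wins the slot; let $R_{-j^*}$ denote the highest effective bid among the other advertisers. If $m_{j^*} > c_{j^*} q_{j^*}$, the winner pays $R_{-j^*}$ per impression; otherwise the winner pays $R_{-j^*}/q_{j^*}$ per click. Let advertiser $j$ have true value $v_j > 0$ per click, and let $\mathcal{P}_j$ be advertiser $j$'s belief (prior distribution) about its click-through probability, with mean $p_j = \mathbb{E}[\mathcal{P}_j] > 0$. Suppose advertiser $j$ is myopic and risk-neutral, i.e. it maximizes its expected profit in the current step, where if it wins it receives expected value $p_j v_j$ and pays either the per-impression price or $p_j$ times the per-click price. Then, regardless of the value of $q_j$, bidding $(v_j p_j, v_j)$ is a strongly dominant strategy for advertiser $j$: for every $q_j>0$ and every value of the highest competing effective bid, it yields expected profit at least as large as any other bid pair, and for every other bid pair $(m_j,c_j)$ there exist values of $q_j$ and of the highest competing effective bid for which $(m_j,c_j)$ yields strictly smaller expected profit than $(v_j p_j, v_j)$.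
   Context: Single-slot auction; all notation is defined in the claim. Expected profit of a losing advertiser is $0$. *)

(* Defs.v *)
From Stdlib Require Import Reals.
Open Scope R_scope.

Definition eff_bid (m c q : R) : R := Rmax m (c * q).

(* The paper does not specify tie-breaking; [tie = true]
   means ties are won by the advertiser, [tie = false] means ties are lost. *)
Definition wins (tie : bool) (Rj r : R) : bool :=
  if tie then (if Rle_dec r Rj then true else false)
  else (if Rlt_dec r Rj then true else false).

(* Myopic risk-neutral expected profit of an advertiser with value v per click
   and mean click-through belief p, bidding (m, c), with auctioneer index q,
   facing highest competing effective bid r. *)
Definition exp_profit (tie : bool) (v p q m c r : R) : R :=
  if wins tie (eff_bid m c q) r then
    (if Rlt_dec (c * q) m then p * v - r else p * v - p * (r / q))
  else 0.

(* Main.v *)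
Require Import Defs.
From Stdlib Require Import Reals Lra Psatz.
Open Scope R_scope.

Ltac crush :=
  unfold exp_profit, wins, eff_bid, Rmax in *;
  repeat match goal with
  | |- context [Rle_dec ?a ?b] => destruct (Rle_dec a b)
  | |- context [Rlt_dec ?a ?b] => destruct (Rlt_dec a b)
  | H : context [Rle_dec ?a ?b] |- _ => destruct (Rle_dec a b)
  | H : context [Rlt_dec ?a ?b] |- _ => destruct (Rlt_dec a b)
  end; try nra.

Theorem theorem1 (tie : bool) (v p : R) (hv : 0 < v) (hp : 0 < p) :
  (* truthful bid (v p, v) is weakly optimal for every q and every r *)
  (forall q r m c, 0 < q -> 0 <= r -> 0 <= m -> 0 <= c ->
     exp_profit tie v p q m c r <= exp_profit tie v p q (v * p) v r)
  /\
  (* every other bid is strictly worse for some q and some r *)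
  (forall m c, 0 <= m -> 0 <= c -> (m, c) <> (v * p, v) ->
     exists q r, 0 < q /\ 0 <= r /\
       exp_profit tie v p q m c r < exp_profit tie v p q (v * p) v r).
Proof.
  split.
  - intros q r m c hq hr hm hc.
    assert (hx : r = (r / q) * q) by (field; lra).
    assert (hx0 : 0 <= r / q) by (apply Rmult_le_pos; [lra| left; apply Rinv_0_lt_compat; lra]).
    unfold exp_profit, wins, eff_bid, Rmax.
    generalize hx hx0; generalize (r / q); intros x Hx Hx0.
    destruct tie; crush.
  - intros m c hm hc hne.
    destruct (Rlt_le_dec v c) as [Hc|Hc].
    + set (q := p + m / c + 1).
      assert (hq1 : c * q = c * p + m + c) by (unfold q; field; lra).
      exists q, ((v + c) * q / 2).
      assert (hq : 0 < q) by (unfold q; assert (0 <= m / c) by (apply Rmult_le_pos; [lra|left; apply Rinv_0_lt_compat; lra]); lra).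
      assert (hd : (v + c) * q / 2 / q = (v + c) / 2) by (field; lra).
      unfold exp_profit; rewrite hd.
      split; [lra|split; [nra|]].
      destruct tie; crush.
    + destruct (Rlt_le_dec c v) as [Hc2|Hc2].
      * set (q := p + m / (v - c) + 1).
        assert (hq1 : (v - c) * q = (v - c) * p + m + (v - c)) by (unfold q; field; lra).
        assert (hq : 0 < q) by (unfold q; assert (0 <= m / (v - c)) by (apply Rmult_le_pos; [lra|left; apply Rinv_0_lt_compat; lra]); lra).
        exists q, ((Rmax m (c * q) + v * q) / 2).
        assert (hd : (Rmax m (c * q) + v * q) / 2 / q = (Rmax m (c * q) / q + v) / 2) by (field; lra).
        unfold exp_profit; rewrite hd.
        assert (hmq : m < v * q) by nra.
        unfold Rmax in *.
        destruct (Rle_dec m (c * q)).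
        -- assert (hd2 : c * q / q = c) by (field; lra). rewrite hd2.
           split; [lra|split; [nra|]]. destruct tie; crush.
        -- assert (hd2 : m / q < v) by (apply Rmult_lt_reg_r with q; [lra|]; unfold Rdiv; rewrite Rmult_assoc, Rinv_l; lra).
           assert (0 <= m / q) by (apply Rmult_le_pos; [lra|left; apply Rinv_0_lt_compat; lra]).
           split; [lra|split; [nra|]]. destruct tie; crush.
      * assert (c = v) by lra. subst c.
        assert (m <> v * p) by (intro; apply hne; subst; reflexivity).
        exists (p / 2).
        assert (hvq : v * (p / 2) = v * p / 2) by field.
        unfold exp_profit, wins, eff_bid; rewrite hvq.
        destruct (Rlt_le_dec (v * p) m).
        -- exists ((v * p + m) / 2). split; [lra|split; [nra|]].
           destruct tie; crush.
        -- exists ((Rmax m (v * p / 2) + v * p) / 2).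
           unfold Rmax in *.
           destruct (Rle_dec m (v * p / 2)); (split; [lra|split; [nra|]]); destruct tie; crush.
Qed.
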